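(* Let $\mathcal{D}$ be the set of density operators on a finite-dimensional Hilbert space, with trace distance $d(\rho,\sigma)=\frac12\|\rho-\sigma\|_1$. Let $S_1\subseteq S_2\subseteq\cdots$ be closed convex subsets of $\mathcal{D}$, and let $V\subseteq\mathcal{D}$ be a set such that for every $\sigma\in V$ and every $\varepsilon>0$ there exist $N$ and $\eta\in S_N$ with $d(\sigma,\eta)<\varepsilon$. Let $\kappa\in V$ be such that for some $\delta>0$ every Hermitian unit-trace operator $\omega$ with $\|\omega-\kappa\|_1\le\delta$ is a density operator belonging to $V$. Then $\kappa\in S_n$ for some $n$. *)

(* Defs.v *)
(* operators on the n-dimensional Hilbert space C^n are
   n x n matrices over C = R[i] (complex numbers over a realType R). *)
From HB Require Import structures.
From mathcomp Require Import all_boot all_order all_algebra.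
From mathcomp Require Import reals.
From mathcomp.real_closed Require Import complex.

Set Implicit Arguments.
Unset Strict Implicit.
Unset Printing Implicit Defensive.

Import Order.TTheory GRing.Theory Num.Theory.
Local Open Scope ring_scope.
Local Open Scope complex_scope.

Definition adjmx (R : realType) (m p : nat) (A : 'M[R[i]]_(m, p)) : 'M[R[i]]_(p, m) :=
  map_mx Num.conj (A^T).

Definition hermitian_op (R : realType) (n : nat) (A : 'M[R[i]]_n) : Prop :=
  adjmx A = A.

(* positive semidefinite: Hermitian and x^* A x >= 0 for every vector x
   (x is written as the column adjmx v of a row vector v) *)
Definition psd (R : realType) (n : nat) (A : 'M[R[i]]_n) : Prop :=
  hermitian_op A /\ forall v : 'rV[R[i]]_n, 0 <= (v *m A *m adjmx v) 0 0.

Definition density (R : realType) (n : nat) (A : 'M[R[i]]_n) : Prop :=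
  psd A /\ \tr A = 1.

(* trace norm ||X||_1 = tr |X| = tr sqrt(X^* X), i.e. the sum of the square
   roots of the eigenvalues of X^* X (spectral decomposition of the
   Hermitian matrix X^* X, from mathcomp's spectral.v) *)
Definition trnorm (R : realType) (n : nat) (X : 'M[R[i]]_n) : R[i] :=
  \sum_(i < n) sqrtC (spectral_diag (adjmx X *m X) 0 i).

Definition trdist (R : realType) (n : nat) (rho sigma : 'M[R[i]]_n) : R[i] :=
  trnorm (rho - sigma) / 2.

Definition convex_set (R : realType) (n : nat) (S : 'M[R[i]]_n -> Prop) : Prop :=
  forall (rho sigma : 'M[R[i]]_n) (t : R),
    S rho -> S sigma -> 0 <= t <= 1 ->
    S (t%:C *: rho + (1 - t)%:C *: sigma).

Definition closed_set (R : realType) (n : nat) (S : 'M[R[i]]_n -> Prop) : Prop :=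
  forall rho : 'M[R[i]]_n,
    (forall eps : R, 0 < eps -> exists sigma, S sigma /\ trdist rho sigma < eps%:C) ->
    S rho.

(* Main.v *)
Require Import Defs.
From HB Require Import structures.
From mathcomp Require Import all_boot all_order all_algebra.
From mathcomp Require Import reals.
From mathcomp.real_closed Require Import complex.
From mathcomp Require Import ring lra.

Module Lib.
Set Implicit Arguments.
Unset Strict Implicit.
Import Order.TTheory GRing.Theory Num.Theory.
Local Open Scope ring_scope.
Local Open Scope complex_scope.
Local Open Scope sesquilinear_scope.


Section T.
Variable R : realType.
Local Notation C := R[i].


Lemma adj_adj n (X : 'M[C]_n) : adjmx (adjmx X) = X.
Proof. by apply/matrixP=> i j; rewrite !mxE conjCK. Qed.

Lemma adjmxM n (X Y : 'M[C]_n) : adjmx (X *m Y) = adjmx Y *m adjmx X.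
Proof. by rewrite /adjmx trmx_mul map_mxM. Qed.

Lemma N_normal n (X : 'M[C]_n) : (adjmx X *m X) \is normalmx.
Proof.
apply/normalmxP.
have -> : (adjmx X *m X)^t* = adjmx X *m X.
  have -> : (adjmx X *m X)^t* = adjmx (adjmx X *m X) by [].
  by rewrite adjmxM adj_adj.
by [].
Qed.

Lemma diagN_entry n (Y : 'M[C]_n) i :
  (adjmx Y *m Y) i i = \sum_k `|Y k i| ^+ 2.
Proof. by rewrite !mxE; apply: eq_bigr => k _; rewrite !mxE normCK mulrC. Qed.

Lemma spec_ge0 n (X : 'M[C]_n) i : 0 <= spectral_diag (adjmx X *m X) 0 i.
Proof.
set N := adjmx X *m X.
have /orthomx_spectralP HN := N_normal X.
set P := spectralmx N in HN.
have Pu : P \is unitarymx by exact: spectral_unitarymx.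
have Pi : P \in unitmx by exact: spectral_unit.
have HD : diag_mx (spectral_diag N) = P *m N *m invmx P.
  have -> : P *m N *m invmx P = P *m (invmx P *m diag_mx (spectral_diag N) *m P) *m invmx P by rewrite -HN.
  by rewrite !mulmxA mulmxV // mul1mx -mulmxA mulmxV // mulmx1.
have : (diag_mx (spectral_diag N)) i i = spectral_diag N 0 i by rewrite mxE eqxx mulr1n.
move=> <-; rewrite HD invmx_unitary //.
set Y := X *m P^t*.
have -> : P *m N *m P^t* = adjmx Y *m Y.
  rewrite /Y adjmxM /N !mulmxA.
  have -> : adjmx (P^t*) = P by rewrite -[RHS]adj_adj.
  by [].
rewrite diagN_entry; apply: sumr_ge0 => k _; exact: exprn_ge0.
Qed.

Lemma spec_sum n (X : 'M[C]_n) :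
  \sum_i spectral_diag (adjmx X *m X) 0 i = \tr (adjmx X *m X).
Proof.
set N := adjmx X *m X.
have /orthomx_spectralP HN := N_normal X.
have Pi : spectralmx N \in unitmx by exact: spectral_unit.
have -> : \tr N = \tr (invmx (spectralmx N) *m diag_mx (spectral_diag N) *m spectralmx N) by rewrite -HN.
by rewrite mxtrace_mulC mulmxA mulmxV // mul1mx mxtrace_diag.
Qed.

Lemma tr_N n (X : 'M[C]_n) : \tr (adjmx X *m X) = \sum_i \sum_k `|X k i| ^+ 2.
Proof. by rewrite /mxtrace; apply: eq_bigr => i _; rewrite diagN_entry. Qed.

Lemma single_le (I : finType) (F : I -> C) i :
  (forall j, 0 <= F j) -> F i <= \sum_j F j.
Proof.
move=> H; rewrite (bigD1 i) //= lerDl; apply: sumr_ge0 => j _; exact: H.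
Qed.

Lemma sqr_sum_ge (I : finType) (F : I -> C) :
  (forall j, 0 <= F j) -> \sum_j F j ^+ 2 <= (\sum_j F j) ^+ 2.
Proof.
move=> H; rewrite expr2 mulr_suml; apply: ler_sum => i _.
rewrite mulr_sumr expr2.
exact: (@single_le _ (fun j => F i * F j) i (fun j => mulr_ge0 (H i) (H j))).
Qed.

Lemma trnorm_ge_entry n (X : 'M[C]_n) k l : `|X k l| <= trnorm X.
Proof.
have Hs i : 0 <= sqrtC (spectral_diag (adjmx X *m X) 0 i) by rewrite sqrtC_ge0 spec_ge0.
have T0 : 0 <= trnorm X by apply: sumr_ge0 => i _.
rewrite -(ler_pXn2r (isT : (0 < 2)%N)) ?nnegrE //.
rewrite /trnorm; apply: (le_trans _ (@sqr_sum_ge _ (fun i => sqrtC (spectral_diag (adjmx X *m X) 0 i)) Hs)).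
under eq_bigr => i _ do rewrite sqrtCK.
rewrite spec_sum tr_N.
have HH := (@single_le _ (fun i => \sum_k0 `|X k0 i| ^+ 2) l (fun j => sumr_ge0 _ (fun k0 _ => exprn_ge0 2 (normr_ge0 (X k0 j))))).
apply: (le_trans _ HH).
exact: (@single_le _ (fun k => `|X k l| ^+ 2) k (fun j => exprn_ge0 2 (normr_ge0 (X j l)))).
Qed.

Lemma trnorm_le_bound n (X : 'M[C]_n) (b : C) : 0 <= b ->
  (forall k l, `|X k l| <= b) -> trnorm X <= (n * n)%:R * b.
Proof.
move=> b0 Hb.
set T := \tr (adjmx X *m X).
have T0 : 0 <= T by rewrite /T tr_N; apply: sumr_ge0 => i _; apply: sumr_ge0 => k _; exact: exprn_ge0.
have nb0 : 0 <= n%:R * b by apply: mulr_ge0 => //; exact: ler0n.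
have HT : T <= (n%:R * b) ^+ 2.
  rewrite /T tr_N.
  have -> : (n%:R * b) ^+ 2 = \sum_(i < n) \sum_(k < n) b ^+ 2.
    by rewrite !sumr_const !card_ord; ring.
  apply: ler_sum => i _; apply: ler_sum => k _.
  by rewrite ler_pXn2r ?nnegrE.
have HsT i : sqrtC (spectral_diag (adjmx X *m X) 0 i) <= n%:R * b.
  rewrite -(sqrCK nb0) ler_sqrtC ?nnegrE ?spec_ge0 ?exprn_ge0 //.
  apply: le_trans HT; rewrite /T -spec_sum.
  exact: (@single_le _ (fun i => spectral_diag (adjmx X *m X) 0 i) i (spec_ge0 X)).
apply: (le_trans (ler_sum _ (fun i _ => HsT i))).
rewrite sumr_const card_ord le_eqVlt; apply/orP; left; apply/eqP; ring.
Qed.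



Lemma conjRC (x : R) : Num.conj (x%:C : C) = x%:C.
Proof. by rewrite /Num.conj /= oppr0. Qed.

Definition phi n (y : 'M[C]_n) : 'M[C]_n :=
  (2^-1) *: (y + adjmx y) - ((\tr y + \tr (adjmx y)) / (2 * n%:R)) *: 1%:M.

Lemma adjmxD n (x y : 'M[C]_n) : adjmx (x + y) = adjmx x + adjmx y.
Proof. by apply/matrixP=> i j; rewrite !mxE rmorphD. Qed.
Lemma adjmxZR n (c : R) (x : 'M[C]_n) : adjmx (c%:C *: x) = c%:C *: adjmx x.
Proof. by apply/matrixP=> i j; rewrite !mxE rmorphM /= conjRC. Qed.
Lemma tr_adj n (x : 'M[C]_n) : \tr (adjmx x) = Num.conj (\tr x).
Proof. by rewrite /mxtrace rmorph_sum; apply: eq_bigr => i _; rewrite !mxE. Qed.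

Lemma phiD n (x y : 'M[C]_n) : phi (x + y) = phi x + phi y.
Proof.
rewrite /phi adjmxD !mxtraceD.
apply/matrixP=> i j; rewrite !mxE; ring.
Qed.

Lemma phiZ n (c : R) (x : 'M[C]_n) : phi (c%:C *: x) = c%:C *: phi x.
Proof.
rewrite /phi adjmxZR !mxtraceZ.
apply/matrixP=> i j; rewrite !mxE; ring.
Qed.

Lemma phi0 n : phi (0 : 'M[C]_n) = 0.
Proof. by have := phiZ 0 (0 : 'M[C]_n); rewrite !scale0r. Qed.

Lemma phi_sum n (I : finType) (c : I -> R) (y : I -> 'M[C]_n) :
  phi (\sum_i (c i)%:C *: y i) = \sum_i (c i)%:C *: phi (y i).
Proof.
elim/big_rec2: _ => [|i a b _ IH]; first exact: phi0.
by rewrite phiD phiZ IH.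
Qed.

Lemma phi_id n (x : 'M[C]_n) : (0 < n)%N -> hermitian_op x -> \tr x = 0 -> phi x = x.
Proof.
move=> n0 hx tx; rewrite /phi hx tx add0r mul0r scale0r subr0.
apply/matrixP=> i j; rewrite !mxE.
by field.
Qed.

Lemma phi_herm n (y : 'M[C]_n) : hermitian_op (phi y).
Proof.
rewrite /hermitian_op /phi.
apply/matrixP=> i j; rewrite !mxE tr_adj.
rewrite !(rmorphB, rmorphM, rmorphD, fmorphV, rmorph_nat, rmorph1) /= !conjCK eq_sym.
ring.
Qed.


Lemma phi_tr n (y : 'M[C]_n) : (0 < n)%N -> \tr (phi y) = 0.
Proof.
move=> n0; rewrite /phi raddfB /= (mxtraceZ (2^-1 : C)) (mxtraceZ ((\tr y + \tr (adjmx y)) / (2 * n%:R))) mxtrace1 mxtraceD.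
have nz : (n%:R : C) != 0 by rewrite pnatr_eq0 -lt0n.
by field.
Qed.

Lemma norm_tr n (y : 'M[C]_n) : (forall k l, `|y k l| <= 1) -> `|\tr y| <= n%:R.
Proof.
move=> H; apply: (le_trans (ler_norm_sum _ _ _)).
apply: (@le_trans _ _ (\sum_(i < n) (1 : C))); first by apply: ler_sum => i _; exact: H.
by rewrite sumr_const card_ord.
Qed.

Lemma phi_entry n (y : 'M[C]_n) : (0 < n)%N -> (forall k l, `|y k l| <= 1) ->
  forall k l, `|phi y k l| <= 2.
Proof.
move=> n0 H k l; rewrite !mxE.
have nz : (0 : C) < n%:R by rewrite ltr0n.
apply: (le_trans (ler_normB _ _)).
rewrite [X in _ <= X](_ : 2 = 1 + 1) //; apply: lerD.
  rewrite normrM normfV normr_nat.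
  apply: (@le_trans _ _ (2^-1 * 2)); last by rewrite mulVf // pnatr_eq0.
  rewrite ler_pM2l ?invr_gt0 ?ltr0n //.
  apply: (le_trans (ler_normD _ _)); rewrite [X in _ <= X](_ : 2 = 1 + 1) //; apply: lerD; first exact: H.
  by rewrite norm_conjC; exact: H.
rewrite normrM; apply: (@le_trans _ _ (`|(\tr y + \tr (adjmx y)) / (2 * n%:R)| * 1)).
  apply: ler_wpM2l; first exact: normr_ge0.
  by case: (k == l); rewrite ?normr1 ?normr0 ?ler01.
rewrite mulr1 normrM normfV normrM !normr_nat.
rewrite ler_pdivrMr ?mulr_gt0 ?ltr0n // mul1r.
apply: (le_trans (ler_normD _ _)); rewrite tr_adj norm_conjC.
have := norm_tr H; move=> h; apply: le_trans (lerD h h) _.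
by rewrite -mulr2n mulr_natl.
Qed.

Definition eps n (t : 'I_n * 'I_n * bool) : 'M[C]_n :=
  (if t.2 then 'i else 1) *: delta_mx t.1.1 t.1.2.
Definition crd n (t : 'I_n * 'I_n * bool) (x : 'M[C]_n) : R :=
  if t.2 then complex.Im (x t.1.1 t.1.2) else complex.Re (x t.1.1 t.1.2).

Lemma sum_triple n (G : 'I_n * 'I_n * bool -> 'M[C]_n) :
  \sum_t G t = \sum_(i < n) \sum_(j < n) (G (i, j, true) + G (i, j, false)).
Proof.
rewrite (eq_bigr (fun t => G (t.1, t.2))); last by case.
rewrite -(pair_bigA _ (fun p b => G (p, b))) /=.
rewrite (eq_bigr (fun p : 'I_n * 'I_n => G (p.1, p.2, true) + G (p.1, p.2, false))); last first.
  by case=> i j _; rewrite big_bool.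
by rewrite -(pair_bigA _ (fun i j => G (i, j, true) + G (i, j, false))).
Qed.

Lemma decomp n (x : 'M[C]_n) : \sum_t (crd t x)%:C *: eps t = x.
Proof.
rewrite sum_triple [RHS]matrix_sum_delta; apply: eq_bigr => i _; apply: eq_bigr => j _.
rewrite /crd /eps /= !scalerA mulr1 -scalerDl; congr (_ *: _).
by rewrite [RHS]complexE addrC mulrC.
Qed.

Lemma normi : `|'i : C| = 1.
Proof. by rewrite normc_def /= expr0n /= add0r expr1n sqrtr1. Qed.

Lemma crd_bound n t (x : 'M[C]_n) : (`|crd t x|)%:C <= `|x t.1.1 t.1.2|.
Proof.
rewrite /crd; case: t.2; last exact: normc_ge_Re.
have := normc_ge_Re (x t.1.1 t.1.2 * 'i).
by rewrite ReiNIm normrN normrM normi mulr1.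
Qed.

Lemma crdD n t (x y : 'M[C]_n) : crd t (x + y) = crd t x + crd t y.
Proof. by rewrite /crd !mxE; case: t.2; case: (x _ _) => a b; case: (y _ _). Qed.

Lemma crdZ n t (c : R) (x : 'M[C]_n) : crd t (c%:C *: x) = c * crd t x.
Proof. by rewrite /crd !mxE; case: t.2; case: (x _ _) => a b /=; ring. Qed.

Lemma crd0 n t : crd t (0 : 'M[C]_n) = 0.
Proof. by rewrite /crd !mxE; case: t.2. Qed.

Lemma crdN n t (x : 'M[C]_n) : crd t (- x) = - crd t x.
Proof. by rewrite /crd !mxE; case: t.2; case: (x _ _). Qed.

Lemma crd_sum n t (I : finType) (c : I -> R) (y : I -> 'M[C]_n) :
  crd t (\sum_i (c i)%:C *: y i) = \sum_i c i * crd t (y i).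
Proof.
elim/big_rec2: _ => [|i a b _ IH]; first exact: crd0.
by rewrite crdD crdZ IH.
Qed.

Lemma eps_entry n t (k l : 'I_n) : `|eps t k l| <= 1.
Proof.
rewrite /eps !mxE normrM.
have -> : `|(if t.2 then 'i else 1) : C| = 1 by case: t.2; rewrite ?normi ?normr1.
by rewrite mul1r; case: (_ && _); rewrite ?normr1 ?normr0 ?ler01.
Qed.

Definition ebas n (t : 'I_n * 'I_n * bool) : 'M[C]_n := phi (eps t).

Lemma ebas_herm n t : hermitian_op (@ebas n t).
Proof. exact: phi_herm. Qed.
Lemma ebas_tr n t : (0 < n)%N -> \tr (@ebas n t) = 0.
Proof. exact: phi_tr. Qed.
Lemma ebas_entry n t : (0 < n)%N -> forall k l, `|@ebas n t k l| <= 2.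
Proof. move=> n0; apply: phi_entry => //; exact: eps_entry. Qed.

Lemma decomp_htl n (x : 'M[C]_n) : (0 < n)%N -> hermitian_op x -> \tr x = 0 ->
  x = \sum_t (crd t x)%:C *: ebas t.
Proof.
move=> n0 hx tx; have := phi_sum (fun t => crd t x) (@eps n).
by rewrite decomp phi_id.
Qed.

Lemma decomp_m n (x : 'M[C]_n) : (0 < n)%N -> hermitian_op x -> \tr x = 0 ->
  x = \sum_(l < #|{: 'I_n * 'I_n * bool}|) (crd (enum_val l) x)%:C *: ebas (enum_val l).
Proof.
move=> n0 hx tx; rewrite {1}(decomp_htl n0 hx tx).
by rewrite (big_enum_val (A := xpredT)).
Qed.


Lemma exists_max (I : finType) (i0 : I) (F : I -> R) : exists k, forall j, F j <= F k.
Proof.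
case: (@Order.TotalTheory.arg_maxP _ _ _ i0 xpredT F isT) => k _ H.
by exists k => j; exact: H.
Qed.

Lemma fix_bound m (M : 'M[R]_m) (b v : 'rV[R]_m) (c : R) :
  (forall l, \sum_k `|M k l| <= 2^-1) -> (forall l, `|b 0 l| <= c) ->
  v = b + v *m M -> forall l, `|v 0 l| <= 2 * c.
Proof.
move=> HM Hb Hv l.
case: m M b v HM Hb Hv l => [|m] M b v HM Hb Hv l; first by case: l.
have [k0 Hk0] := exists_max ord0 (fun k => `|v 0 k|).
apply: le_trans (Hk0 l) _.
have H1 : `|v 0 k0| <= c + `|v 0 k0| * 2^-1.
  rewrite {1}Hv !mxE; apply: (le_trans (ler_normD _ _)); apply: lerD; first exact: Hb.
  apply: (le_trans (ler_norm_sum _ _ _)).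
  apply: (@le_trans _ _ (\sum_k `|v 0 k0| * `|M k k0|)).
    by apply: ler_sum => k _; rewrite normrM ler_wpM2r.
  by rewrite -mulr_sumr ler_wpM2l.
lra.
Qed.

Lemma solve_fix m (M : 'M[R]_m) (a : 'rV[R]_m) (c : R) :
  (forall l, \sum_k `|M k l| <= 2^-1) -> (forall l, `|a 0 l| <= c) ->
  exists y : 'rV[R]_m, y = a + y *m M /\ forall l, `|y 0 l| <= 2 * c.
Proof.
move=> HM Ha.
set A := 1%:M - M.
have Au : A \in unitmx.
  rewrite unitmxE unitfE; apply/negP => /det0P [v vn0 hv].
  move: hv; rewrite /A mulmxBr mulmx1 => /eqP; rewrite subr_eq0 => /eqP hv.
  have Hv : v = 0 + v *m M by rewrite add0r.
  have H0 : forall l, `|(0 : 'rV[R]_m) 0 l| <= 0 by move=> l; rewrite mxE normr0.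
  have := fix_bound HM H0 Hv; rewrite mulr0 => Hl.
  move/eqP: vn0; apply; apply/rowP => l; rewrite mxE.
  by apply/eqP; rewrite -normr_le0 Hl.
have Hy : (a *m invmx A) = a + (a *m invmx A) *m M.
  apply/eqP; rewrite -subr_eq0 opprD addrA addrAC -{1}[a *m invmx A]mulmx1 -mulmxBr.
  by rewrite -/A mulmxKV // subrr.
exists (a *m invmx A); split => //.
exact: fix_bound HM Ha Hy.
Qed.



Lemma conv_comb n (S : 'M[C]_n -> Prop) : convex_set S ->
  forall m (p : 'I_m -> R) (z : 'I_m -> 'M[C]_n),
  (forall k, 0 <= p k) -> \sum_k p k = 1 -> (forall k, S (z k)) ->
  S (\sum_k (p k)%:C *: z k).
Proof.
move=> Hc; elim=> [|m IH] p z Hp Hs Hz.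
  by move: Hs; rewrite big_ord0 => /eqP; rewrite eq_sym oner_eq0.
rewrite big_ord_recr /=.
move: Hs; rewrite big_ord_recr /=.
set s := \sum_(i < m) p (widen_ord (leqnSn m) i) => Hs.
have s0 : 0 <= s by apply: sumr_ge0 => i _; exact: Hp.
have pl : p ord_max = 1 - s by rewrite -Hs addrC addrK.
have [s_eq0|s_gt0] := eqVneq s 0.
  have H0 : forall i : 'I_m, p (widen_ord (leqnSn m) i) = 0.
    move=> i; apply: (psumr_eq0P (P := xpredT) (F := fun i => p (widen_ord (leqnSn m) i))) => // j _; exact: Hp.
  rewrite big1 ?add0r; last by move=> i _; rewrite H0 scale0r.
  by rewrite pl s_eq0 subr0 scale1r.
have sp : 0 < s by rewrite lt_def s_gt0 s0.
have -> : \sum_(i < m) (p (widen_ord (leqnSn m) i))%:C *: z (widen_ord (leqnSn m) i)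
   = s%:C *: \sum_(i < m) (p (widen_ord (leqnSn m) i) / s)%:C *: z (widen_ord (leqnSn m) i).
  rewrite scaler_sumr; apply: eq_bigr => i _; rewrite scalerA -rmorphM /=.
  by rewrite mulrC divfK.
rewrite pl; apply: Hc.
- apply: IH => //.
  + by move=> k; apply: divr_ge0 => //; exact: Hp.
  + by rewrite -mulr_suml -/s mulfV.
- exact: Hz.
- by rewrite s0 /= -Hs lerDl Hp.
Qed.

Lemma mono_S n (S : nat -> 'M[C]_n -> Prop) :
  (forall k rho, S k rho -> S k.+1 rho) -> forall a b rho, (a <= b)%N -> S a rho -> S b rho.
Proof.
move=> H a b rho ab; elim: b ab => [|b IH]; first by rewrite leqn0 => /eqP ->.
rewrite leq_eqVlt => /orP [/eqP -> //|]; rewrite ltnS => /IH h /h; exact: H.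
Qed.

Definition htl n (x : 'M[C]_n) := hermitian_op x /\ \tr x = 0.

Lemma htlD n (x y : 'M[C]_n) : htl x -> htl y -> htl (x + y).
Proof. by move=> [hx tx] [hy ty]; split; [rewrite /hermitian_op adjmxD hx hy | rewrite mxtraceD tx ty addr0]. Qed.

Lemma htlZ n (c : R) (x : 'M[C]_n) : htl x -> htl (c%:C *: x).
Proof. by move=> [hx tx]; split; [rewrite /hermitian_op adjmxZR hx | rewrite (mxtraceZ c%:C) tx mulr0]. Qed.

Lemma htlN n (x : 'M[C]_n) : htl x -> htl (- x).
Proof.
move=> hx; have -> : - x = (-1 : R)%:C *: x by apply/matrixP=> i j; rewrite !mxE rmorphN rmorph1 mulN1r.
exact: htlZ.
Qed.

Lemma htl0 n : htl (0 : 'M[C]_n).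
Proof. by split; [apply/matrixP=> i j; rewrite !mxE rmorph0 | rewrite mxtrace0]. Qed.

Lemma htl_sum n (I : finType) (c : I -> R) (y : I -> 'M[C]_n) :
  (forall i, htl (y i)) -> htl (\sum_i (c i)%:C *: y i).
Proof.
move=> H; elim/big_rec: _ => [|i a _ IH]; first exact: htl0.
by apply: htlD => //; apply: htlZ.
Qed.

End T.
Section T4.
Variable R : realType.
Local Notation C := R[i].
Lemma normRC (x : R) : `|x%:C : C| = (`|x|)%:C.
Proof. by rewrite normc_def /= expr0n /= addr0 sqrtr_sqr. Qed.
End T4.
Section T5.
Variable R : realType.
Local Notation C := R[i].
Lemma herm_sub n (a b : 'M[C]_n) : hermitian_op a -> hermitian_op b -> hermitian_op (a - b).
Proof. by move=> ha hb; rewrite /hermitian_op -[RHS](congr1 (fun u => u - b) ha) -[in RHS]hb; apply/matrixP=> i j; rewrite !mxE rmorphB. Qed.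
End T5.
Section T6.
Variable R : realType.
Local Notation C := R[i].
Lemma half_bound (a b e : C) (s : bool) : `|a| <= e -> `|b| <= e ->
  `|(2^-1 : R)%:C * (a + (if s then b else - b))| <= e.
Proof.
move=> ha hb; rewrite normrM normRC.
have -> : `|(2^-1 : R)| = 2^-1 by rewrite ger0_norm // invr_ge0 ler0n.
have -> : ((2^-1 : R)%:C : C) = 2^-1 by rewrite fmorphV rmorph_nat.
have hb' : `|(if s then b else - b)| <= e by case: s; rewrite ?normrN.
have : `|a + (if s then b else - b)| <= e + e by apply: le_trans (ler_normD _ _) (lerD ha hb').
move=> H; apply: le_trans (ler_wpM2l _ H) _; first by rewrite invr_ge0 ler0n.
by rewrite le_eqVlt; apply/orP; left; apply/eqP; field.
Qed.

Lemma crd_le n t (x : 'M[C]_n) (e : R) : (forall i j, `|x i j| <= e%:C) -> `|crd t x| <= e.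
Proof. by move=> H; rewrite -lecR; apply: le_trans (crd_bound t x) (H _ _). Qed.
End T6.
Lemma twoC (R : realType) (e : R) : 2 * e%:C = (2 * e)%:C.
Proof. by rewrite rmorphM /= rmorphMn rmorph1. Qed.
Lemma half_bound_mx (R : realType) n (A B : 'M[R[i]]_n) (e : R[i]) (s : bool) i j :
  `|A i j| <= e -> `|B i j| <= e ->
  `|((2^-1 : R)%:C *: (A + (if s then B else - B))) i j| <= e.
Proof.
move=> ha hb; have := half_bound s ha hb.
by case: s; rewrite !mxE.
Qed.
Lemma key_arith (R : realType) (m r : R) : m != 0 -> r != 0 -> m * (2 * (r / (4 * m))) / r = 2^-1.
Proof. by move=> h1 h2; field; rewrite h1 h2. Qed.

End Lib.
Import Lib.

Import Order.TTheory GRing.Theory Num.Theory.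
Local Open Scope ring_scope.
Local Open Scope complex_scope.

Theorem mainTheorem8 (R : realType) (n : nat)
    (S : nat -> 'M[R[i]]_n -> Prop) (V : 'M[R[i]]_n -> Prop)
    (kappa : 'M[R[i]]_n) :
  (forall k rho, S k rho -> density rho) ->
  (forall k, closed_set (S k)) ->
  (forall k, convex_set (S k)) ->
  (forall k rho, S k rho -> S k.+1 rho) ->
  (forall sigma, V sigma -> density sigma) ->
  (forall sigma, V sigma -> forall eps : R, 0 < eps ->
     exists N eta, S N eta /\ trdist sigma eta < eps%:C) ->
  V kappa ->
  (exists delta : R, 0 < delta /\
     forall omega : 'M[R[i]]_n, hermitian_op omega -> \tr omega = 1 ->
       trnorm (omega - kappa) <= delta%:C -> density omega /\ V omega) ->
  exists k, S k kappa.
Proof.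
move=> HSd _ Hconv Hmono HVd Happ HVk [delta [d0 Hball]].
have [[kh _] ktr] := HVd _ HVk.
have n0 : (0 < n)%N.
  case: n kappa ktr {HSd Hconv Hmono HVd Happ HVk Hball S V kh} => // kappa.
  by rewrite /mxtrace big_ord0 => /eqP; rewrite eq_sym oner_eq0.
pose m := #|{: 'I_n * 'I_n * bool}|.
have m0 : (0 < m)%N by apply/card_gt0P; exists (Ordinal n0, Ordinal n0, true).
pose B (k : 'I_m) := @ebas R n (enum_val k).
pose cr (k : 'I_m) (x : 'M[R[i]]_n) := crd (enum_val k) x.
pose r := delta / (4 * (n * n)%:R).
have r0 : 0 < r by apply: divr_gt0 => //; rewrite mulr_gt0 // ltr0n muln_gt0 n0.
pose w k (s : bool) := kappa + ((if s then r else - r)%:C) *: B k.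
have Hw : forall k s, hermitian_op (w k s) /\ \tr (w k s) = 1.
  move=> k s; split.
    by rewrite /hermitian_op /w adjmxD adjmxZR kh ebas_herm.
  by rewrite /w mxtraceD (mxtraceZ ((if s then r else - r)%:C)) ebas_tr // mulr0 addr0.
have Vw : forall k s, V (w k s).
  move=> k s; have [hw tw] := Hw k s.
  apply: (Hball _ hw tw _).2.
  rewrite /w addrAC subrr add0r.
  have q0 : (0 : R) < (n * n)%:R by rewrite ltr0n muln_gt0 n0.
  apply: le_trans (trnorm_le_bound (b := 2 * r%:C) _ _) _.
  - by apply: mulr_ge0; rewrite ?ler0n // lecR ltW.
  - move=> i j; rewrite mxE normrM normRC.
    have -> : `|(if s then r else - r)| = r by case: (s); rewrite ?normrN gtr0_norm.
    rewrite mulrC; apply: ler_wpM2r; first by rewrite lecR ltW.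
    by apply: ebas_entry.
  have e : (n * n)%:R * (2 * r%:C) = ((n * n)%:R * (2 * r) : R)%:C by rewrite !rmorphM !rmorph_nat.
  rewrite e lecR.
  have -> : (n * n)%:R * (2 * r) = delta / 2.
    by rewrite /r; field; rewrite pnatr_eq0 -lt0n.
  by rewrite ler_pdivrMr ?ltr0n // ler_peMr ?ltW //; lra.
pose eps0 := r / (4 * m%:R).
have e0 : 0 < eps0 by apply: divr_gt0 => //; rewrite mulr_gt0 // ltr0n.
have : forall ks : 'I_m * bool, exists p : nat * 'M[R[i]]_n,
    S p.1 p.2 /\ trdist (w ks.1 ks.2) p.2 < eps0%:C.
  move=> [k s]; have [N [eta [H1 H2]]] := Happ _ (Vw k s) _ e0.
  by exists (N, eta).
case/fin_all_exists => P HP.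
pose N := \max_(ks : 'I_m * bool) (P ks).1.
pose eta k s := (P (k, s)).2.
have SN : forall k s, S N (eta k s).
  move=> k s; have [H1 _] := HP (k, s).
  by apply: (mono_S Hmono _ H1); exact: (leq_bigmax (F := fun ks => (P ks).1) (k, s)).
pose f k s := eta k s - w k s.
have fb : forall k s i j, `|f k s i j| <= 2 * eps0%:C.
  move=> k s i j; have [_ H2] := HP (k, s).
  rewrite /f -opprB mxE normrN.
  apply: le_trans (trnorm_ge_entry _ i j) _.
  move: H2; rewrite /trdist /= -/(eta k s) => H2.
  have -> : trnorm (w k s - eta k s) = trnorm (w k s - eta k s) / 2 * 2 by rewrite divfK ?pnatr_eq0.
  rewrite mulrC.
  by rewrite ler_wpM2l ?ler0n // ltW.
have fh : forall k s, htl (f k s).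
  move=> k s; have [[[he _] te]] := HSd _ _ (SN k s); have [hw tw] := Hw k s.
  by split; [exact: herm_sub | rewrite raddfB /= te tw subrr].
pose h k := (2^-1 : R)%:C *: (f k true + f k false).
pose g k := (2^-1 : R)%:C *: (f k true - f k false).
have hh : forall k, htl (h k) by move=> k; apply/htlZ/htlD; exact: fh.
have gh : forall k, htl (g k) by move=> k; apply/htlZ/htlD; [exact: fh | apply: htlN; exact: fh].
have e2 := twoC eps0.
have hb : forall k l, `|cr l (h k)| <= 2 * eps0.
  move=> k l; apply: crd_le => i j; rewrite -e2.
  exact: (half_bound_mx true (fb k true i j) (fb k false i j)).
have gb : forall k l, `|cr l (g k)| <= 2 * eps0.
  move=> k l; apply: crd_le => i j; rewrite -e2.
  exact: (half_bound_mx false (fb k true i j) (fb k false i j)).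
have rn0 : r != 0 by rewrite gt_eqF.
have mn0 : (m%:R : R) != 0 by rewrite pnatr_eq0 -lt0n.
have key : m%:R * (2 * eps0) / r = 2^-1 by exact: key_arith.
pose M : 'M[R]_m := \matrix_(k, l) (- cr l (g k) / r).
pose a : 'rV[R]_m := \row_l (- (\sum_k cr l (h k)) / r).
have HM : forall l, \sum_k `|M k l| <= 2^-1.
  move=> l; rewrite -key.
  apply: (@le_trans _ _ (\sum_(k < m) (2 * eps0 / r))); last by rewrite sumr_const card_ord le_eqVlt; apply/orP; left; apply/eqP; ring.
  apply: ler_sum => k _; rewrite mxE normrM normrN normfV (gtr0_norm r0).
  by rewrite ler_pM2r ?invr_gt0.
have Ha : forall l, `|a 0 l| <= 2^-1.
  move=> l; rewrite -key mxE normrM normrN normfV (gtr0_norm r0) ler_pM2r ?invr_gt0 //.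
  apply: le_trans (ler_norm_sum _ _ _) _.
  apply: (@le_trans _ _ (\sum_(k < m) (2 * eps0))); last by rewrite sumr_const card_ord le_eqVlt; apply/orP; left; apply/eqP; ring.
  by apply: ler_sum => k _.
have [y [Hy yb]] := solve_fix HM Ha.
have yb1 : forall k, -1 <= y 0 k <= 1.
  by move=> k; have := yb k; rewrite divff ?pnatr_eq0 // ler_norml.
pose t k := (1 + y 0 k) / 2.
have t01 : forall k, 0 <= t k <= 1.
  move=> k; have /andP [h1 h2] := yb1 k; apply/andP; split.
    by apply: divr_ge0; [lra | exact: ler0n].
  by rewrite ler_pdivrMr ?ltr0n // mul1r; lra.
pose z k := (t k)%:C *: eta k true + (1 - t k)%:C *: eta k false.
have Sz : forall k, S N (z k) by move=> k; apply: Hconv; [exact: SN | exact: SN | exact: t01].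
have Hz : forall k, z k = kappa + (y 0 k * r)%:C *: B k + h k + (y 0 k)%:C *: g k.
  move=> k; rewrite /z /h /g /f /w /t; apply/matrixP => i j; rewrite !mxE /=.
  rewrite !(rmorphM, rmorphD, rmorphB, rmorphN, rmorph1, fmorphV, rmorphMn) /=.
  by field; rewrite ?pnatr_eq0 -?lt0n ?n0.
pose Q := \sum_k (1 : R)%:C *: h k + \sum_k (y 0 k)%:C *: g k.
have [Qh Qt] : htl Q by apply: htlD; apply: htl_sum.
have Qdec := decomp_m n0 Qh Qt.
have coef : forall l, y 0 l * r + cr l Q = 0.
  move=> l; rewrite /cr crdD !crd_sum.
  have := congr1 (fun v : 'rV[R]_m => v 0 l) Hy; rewrite /= !mxE => ->.
  rewrite mulrDl mulr_suml.
  have EM : forall i, y 0 i * M i l * r = - (y 0 i * crd (enum_val l) (g i)).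
    by move=> i; rewrite /M mxE /cr; field.
  rewrite (eq_bigr _ (fun i _ => EM i)).
  under [\sum_(i < m) 1 * _]eq_bigr do rewrite mul1r.
  rewrite sumrN /cr; by field.
have W : \sum_k ((y 0 k * r)%:C *: B k + h k + (y 0 k)%:C *: g k) = 0.
  rewrite big_split big_split /= -addrA.
  have -> : \sum_k h k = \sum_k (1 : R)%:C *: h k by apply: eq_bigr => k _; rewrite rmorph1 scale1r.
  rewrite -/Q Qdec -big_split /=.
  apply: big1 => l _; rewrite -scalerDl -rmorphD /=.
  by have := coef l; rewrite /cr => ->; rewrite scale0r.
have Hfin : \sum_k (m%:R^-1)%:C *: z k = kappa.
  rewrite (eq_bigr (fun k => (m%:R^-1)%:C *: kappa + (m%:R^-1)%:C *: ((y 0 k * r)%:C *: B k + h k + (y 0 k)%:C *: g k))); last first.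
    by move=> k _; rewrite Hz -!addrA scalerDr.
  rewrite big_split /= -[X in _ + X]scaler_sumr W scaler0 addr0.
  rewrite sumr_const card_ord -scaler_nat scalerA.
  have -> : (m%:R : R[i]) * (m%:R^-1)%:C = 1 by rewrite fmorphV /= rmorph_nat mulfV // pnatr_eq0 -lt0n.
  by rewrite scale1r.
exists N; rewrite -Hfin; apply: (conv_comb (Hconv N)) => //.
- by move=> k; rewrite invr_ge0 ler0n.
- by rewrite sumr_const card_ord -[_ *+ m]mulr_natl mulfV.
Qed.
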